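(* Let $s,r,R$ be positive integers with $s\ge 2$, and let $\delta=(r+1)(R+1)-sr-1$. Suppose $\delta\ge 1$ and $R+1\le sr$ (so that $B(R)\neq\mathbb F_q^{s\times r}$). Then there exists an $R$-sticky vector $m\in\mathbb F_q^{s\times r}$ for $B(R)$; i.e. there is $m\notin B(R)$ such that every ball $B(c,R)$ containing $m$ intersects $B(R)$. Consequently, for $\delta\ge 1$ there are no non-trivial $R$-perfect codes in $\mathbb F_q^{s\times r}$ with respect to the NRT metric.
   Context: $q$ is a prime power, $\mathbb F_q^{s\times r}$ the set of $s\times r$ matrices over $\mathbb F_q$ with rows $x_1,\dots,x_s\in\mathbb F_q^{1\times r}$. For a row $y=(y_1,\dots,y_r)$, the NRT weight is $w(y)=\max\{j: y_j\neq 0\}$ if $y\neq 0$ and $w(0)=0$; for a matrix $x$, $w(x)=\sum_i w(x_i)$. The NRT metric is $d(x,y)=w(x-y)$; $B(c,R)=\{x: d(x,c)\le R\}$, $B(R)=B(0,R)$. The $R$-closure of $S$ is the set of points $p$ such that every ball of radius $R$ containing $p$ contains some point of $S$; elements of the $R$-closure of $S$ not in $S$ are called $R$-sticky vectors for $S$. A code $C\subseteq\mathbb F_q^{s\times r}$ is $R$-perfect if the balls $B(c,R)$, $c\in C$, are pairwise disjoint and cover $\mathbb F_q^{s\times r}$; it is non-trivial if $|C|>1$ and $C\ne\mathbb F_q^{s\times r}$. *)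

(* Defs.v *)
From HB Require Import structures.
From mathcomp Require Import all_boot all_order all_algebra.
Set Implicit Arguments. Unset Strict Implicit. Unset Printing Implicit Defensive.
Import GRing.Theory.
Local Open Scope ring_scope.

(* NRT space F^{s x r}: matrices 'M[F]_(s, r); row i is x i, entries x i j
   with columns j : 'I_r (0-indexed, so column j is coordinate j+1). *)

Definition nrt_row_weight (F : finFieldType) (s r : nat) (x : 'M[F]_(s, r)) (i : 'I_s) : nat :=
  \max_(j < r | x i j != 0 :> F) j.+1.

Definition nrt_weight (F : finFieldType) (s r : nat) (x : 'M[F]_(s, r)) : nat :=
  \sum_(i < s) nrt_row_weight x i.

Definition nrt_dist (F : finFieldType) (s r : nat) (x y : 'M[F]_(s, r)) : nat :=
  nrt_weight (x - y).

Definition nrt_ball (F : finFieldType) (s r : nat) (c : 'M[F]_(s, r)) (R : nat)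
  : {set 'M[F]_(s, r)} :=
  [set x | (nrt_dist x c <= R)%N].

Definition nrt_closure (F : finFieldType) (s r : nat) (R : nat) (S : {set 'M[F]_(s, r)})
  : {set 'M[F]_(s, r)} :=
  [set p | [forall c, (p \in nrt_ball c R) ==> [exists x in S, x \in nrt_ball c R]]].

Definition nrt_sticky (F : finFieldType) (s r : nat) (R : nat) (S : {set 'M[F]_(s, r)})
  (m : 'M[F]_(s, r)) : bool :=
  (m \in nrt_closure R S) && (m \notin S).

Definition nrt_perfect (F : finFieldType) (s r : nat) (R : nat) (C : {set 'M[F]_(s, r)}) : Prop :=
  (forall c1 c2, c1 \in C -> c2 \in C -> c1 != c2 ->
      [disjoint nrt_ball c1 R & nrt_ball c2 R]) /\
  (forall x : 'M[F]_(s, r), exists2 c, c \in C & x \in nrt_ball c R).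

Definition nrt_nontrivial (F : finFieldType) (s r : nat) (C : {set 'M[F]_(s, r)}) : Prop :=
  (1 < #|C|)%N /\ C != [set: 'M[F]_(s, r)].

(* Main.v *)
Require Import Defs.
From HB Require Import structures.
From mathcomp Require Import all_boot all_order all_algebra.
From mathcomp Require Import zify.
Set Implicit Arguments. Unset Strict Implicit. Unset Printing Implicit Defensive.

Lemma sum_ge_const (n k a : nat) :
  (\sum_(i < n) (if k <= i then a else 0) = (n - k) * a)%N.
Proof.
elim: n => [|n IH]; first by rewrite big_ord0 ?min0n ?sub0n.
rewrite big_ord_recr /= IH; case: leqP => H; nia.
Qed.

Lemma sum_lt_const (n k a : nat) :
  (\sum_(i < n) (if i < k then a else 0) = minn n k * a)%N.
Proof.
elim: n => [|n IH]; first by rewrite big_ord0 ?min0n ?sub0n.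
rewrite big_ord_recr /= IH; case: ltnP => H; nia.
Qed.

Section S.
Import GRing.Theory.
Local Open Scope ring_scope.
Variables (F : finFieldType) (s r : nat).
Implicit Types x y m c : 'M[F]_(s, r).
Local Notation rw := nrt_row_weight.

Lemma rw_leP x i k : (forall j, x i j != 0 -> (j.+1 <= k)%N) -> (rw x i <= k)%N.
Proof. move=> H; apply/bigmax_leqP => j; exact: H. Qed.

Lemma rw_ge x i j : x i j != 0 -> (j.+1 <= rw x i)%N.
Proof. move=> H; exact: (leq_bigmax_cond (P := fun j => x i j != 0)). Qed.

Lemma rw_ext x y i i' : (forall j, x i j = y i' j) -> rw x i = rw y i'.
Proof. move=> H; rewrite /nrt_row_weight; apply: eq_bigl => j; by rewrite H. Qed.

Lemma rw_zero x i : (forall j, x i j = 0) -> rw x i = 0%N.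
Proof. move=> H; apply/eqP; rewrite -leqn0; apply: rw_leP => j; by rewrite H eqxx. Qed.

Lemma rwD x y i : (rw (x + y) i <= maxn (rw x i) (rw y i))%N.
Proof.
apply: rw_leP => j; rewrite mxE => nz.
case: (eqVneq (x i j) 0) => [x0|xn].
- rewrite x0 add0r in nz; exact: leq_trans (rw_ge nz) (leq_maxr _ _).
- exact: leq_trans (rw_ge xn) (leq_maxl _ _).
Qed.

Lemma rwN x i : rw (- x) i = rw x i.
Proof. rewrite /nrt_row_weight; apply: eq_bigl => j; by rewrite mxE oppr_eq0. Qed.

Lemma rw_leqr x i : (rw x i <= r)%N.
Proof. apply: rw_leP => j _; exact: ltn_ord j. Qed.

Lemma rw_c_le m c i : (rw c i <= maxn (rw m i) (rw (m - c) i))%N.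
Proof.
have E : c = m + (- (m - c)) by rewrite opprB subrKC.
by rewrite {1}E; apply: leq_trans (rwD _ _ _) _; rewrite rwN.
Qed.

Lemma rw_top m c i : (rw (m - c) i < rw m i)%N -> rw c i = rw m i.
Proof.
move=> H; apply/eqP; rewrite eqn_leq; apply/andP; split.
- have := rw_c_le m c i; rewrite leq_max => /orP[] // /leq_trans; apply.
  exact: ltnW H.
- have := rwD c (m - c) i; rewrite subrKC leq_max => /orP[] // H2.
  by move: (leq_ltn_trans H2 H); rewrite ltnn.
Qed.

Definition selx (G : {set 'I_s}) c : 'M[F]_(s, r) :=
  \matrix_(i, j) (if i \in G then c i j else 0).

Lemma w_selx G c :
  nrt_weight (selx G c - 0) = (\sum_i (if i \in G then rw c i else 0))%N.
Proof.
rewrite subr0 /nrt_weight; apply: eq_bigr => i _; case: ifP => H.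
- by apply: rw_ext => j; rewrite mxE H.
- by apply: rw_zero => j; rewrite mxE H.
Qed.

Lemma w_selx_c G c :
  nrt_weight (selx G c - c) = (\sum_i (if i \in G then 0 else rw c i))%N.
Proof.
rewrite /nrt_weight; apply: eq_bigr => i _; case: ifP => H.
- by apply: rw_zero => j; rewrite !mxE H subrr.
- by rewrite -(rwN c); apply: rw_ext => j; rewrite !mxE H add0r.
Qed.

Definition unitm (w : 'I_s -> nat) : 'M[F]_(s, r) :=
  \matrix_(i, j) (if j.+1 == w i then 1 else 0).

Lemma rw_unitm (w : 'I_s -> nat) i : (w i <= r)%N -> rw (unitm w) i = w i.
Proof.
move=> wr; apply/eqP; rewrite eqn_leq; apply/andP; split.
- apply: rw_leP => j; rewrite mxE; case: (eqVneq j.+1 (w i)) => [->|_] //; by rewrite eqxx.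
- case E: (w i) => [//|k].
  have kr : (k < r)%N by rewrite -E.
  have := @rw_ge (unitm w) i (Ordinal kr); rewrite mxE /= E eqxx oner_eq0; exact.
Qed.

End S.

Lemma sum_split (I : finType) (P : pred I) (f : I -> nat) :
  (\sum_i f i = \sum_i (if P i then f i else 0) + \sum_i (if P i then 0 else f i))%N.
Proof. rewrite -big_split /=; apply: eq_bigr => i _; by case: (P i); rewrite ?addn0. Qed.

Section S2.
Import GRing.Theory.
Variables (F : finFieldType) (s r : nat).
Implicit Types x y m c : 'M[F]_(s, r).
Local Notation rw := nrt_row_weight.

Lemma sticky_core (w : 'I_s -> nat) m R :
  (forall i, rw m i = w i) -> (\sum_i w i = R.+1)%N ->
  ((forall i, 0 < w i <= R)%N \/
   ((R.+1 <= s)%N /\ (forall i : 'I_s, w i = if (i < R.+1)%N then 1%N else 0%N)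
     /\ ((s - R.+1) * r < R)%N)) ->
  forall c, (nrt_weight (m - c)%R <= R)%N ->
  exists G, (nrt_weight (selx G c - 0)%R <= R)%N /\ (nrt_weight (selx G c - c)%R <= R)%N.
Proof.
move=> Hw Hsum Hcase c Hc.
pose f i := rw c i. pose g i := rw (m - c)%R i.
have Hg : (\sum_i g i <= R)%N by exact: Hc.
have Hfle : forall i, (rw c i <= maxn (w i) (g i))%N by move=> i; rewrite -Hw; exact: rw_c_le.
have Hftop : forall i, (g i < w i)%N -> rw c i = w i by move=> i; rewrite -Hw; exact: rw_top.
case: (boolP [exists i, (0 < w i)%N && (w i <= g i)%N]).
- case/existsP => i0 /andP[w0 wg0].
  exists [set i | (g i < w i)%N]; rewrite w_selx w_selx_c; split.
  + apply: (@leq_trans (\sum_i (if i \in [set i | (g i < w i)%N] then w i else 0))%N).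
      apply: leq_sum => i _; rewrite inE; case: ifP => // H; by rewrite Hftop.
    have := sum_split (fun i => i \in [set i | (g i < w i)%N]) w.
    rewrite Hsum (bigD1 i0 (P := xpredT) (F := fun i => if i \in [set i | (g i < w i)%N] then 0%N else w i)) //= inE ltnNge wg0 /=.
    lia.
  + apply: leq_trans Hg; apply: leq_sum => i _; rewrite inE; case: ifP => // H.
    have := Hfle i; rewrite leq_max => /orP[] // /leq_trans; apply.
    by rewrite leqNgt H.
- rewrite negb_exists => /forallP Hall.
  have Hf1 : forall i, (0 < w i)%N -> rw c i = w i.
    move=> i H; apply: Hftop; have := Hall i; rewrite H /= -ltnNge; exact.
  case: Hcase => [P1 | [Rs [P2 Hd]]].
  + have s0 : (0 < s)%N.
      case: s w Hsum {Hw Hfle Hftop Hall Hf1 P1 Hg Hc} => // w; by rewrite big_ord0.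
    pose i1 := Ordinal s0.
    exists [set i1]; rewrite w_selx w_selx_c.
    rewrite (bigD1 i1 (P := xpredT)) //= (bigD1 i1 (P := xpredT) (F := fun i => if _ then 0%N else _)) //=.
    rewrite !inE eqxx /= big1; last by move=> i /negPf; rewrite inE => ->.
    move: Hsum; rewrite (bigD1 i1 (P := xpredT)) //= => Hsum.
    have -> : (\sum_(i | i != i1) (if i \in [set i1] then 0 else rw c i) =
               \sum_(i | i != i1) w i)%N.
      apply: eq_bigr => i /negPf; rewrite inE => ->; apply: Hf1; by have /andP[] := P1 i.
    have := P1 i1; have := Hf1 i1; rewrite /f => E /andP[w1 w2]; rewrite E //.
    split; first by rewrite addn0.
    by rewrite add0n -ltnS -Hsum -add1n leq_add2r.
  + pose SZ := (\sum_(i : 'I_s) (if (R.+1 <= i)%N then f i else 0))%N.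
    have HSZ : (SZ <= (s - R.+1) * r)%N.
      rewrite -sum_ge_const; apply: leq_sum => i _; case: ifP => // _; exact: rw_leqr.
    pose t := SZ.+1.
    have fN : forall i : 'I_s, (i < R.+1)%N -> rw c i = 1%N.
      move=> i H; rewrite Hf1 P2 H //.
    have Htot : (\sum_i f i = R.+1 + SZ)%N.
      rewrite (sum_split (fun i : 'I_s => (i < R.+1)%N)) /SZ; congr (_ + _)%N.
        transitivity (\sum_(i < s) (if (i < R.+1)%N then 1 else 0))%N;
          last by rewrite sum_lt_const muln1; apply/minn_idPr.
        apply: eq_bigr => i _; case: (ltnP i R.+1) => H //; exact: fN.
      apply: eq_bigr => i _; by case: (ltnP i R.+1).
    exists [set i : 'I_s | (t <= i)%N]; rewrite w_selx w_selx_c.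
    have Hlow : (\sum_i (if i \in [set i : 'I_s | (t <= i)%N] then 0 else rw c i) = t)%N.
      have tR : (t <= R)%N by rewrite /t; lia.
      transitivity (\sum_(i < s) (if (i < t)%N then 1 else 0))%N;
        last by rewrite sum_lt_const muln1; apply/minn_idPr; lia.
      apply: eq_bigr => i _; rewrite inE ltnNge; case: ifP => //= H.
      apply: fN; move: H => /negbT; rewrite -ltnNge => H; lia.
    have := sum_split (fun i => i \in [set i : 'I_s | (t <= i)%N]) f.
    rewrite Htot /f Hlow /t => E.
    split; last exact: leq_ltn_trans HSZ Hd.
    by move: E; rewrite addnS addSn => /eqP; rewrite eqSS eqn_add2r => /eqP <-.
Qed.

Lemma sticky_of (w : 'I_s -> nat) R :
  (forall i, w i <= r)%N -> (\sum_i w i = R.+1)%N ->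
  ((forall i, 0 < w i <= R)%N \/
   ((R.+1 <= s)%N /\ (forall i : 'I_s, w i = if (i < R.+1)%N then 1%N else 0%N)
     /\ ((s - R.+1) * r < R)%N)) ->
  nrt_sticky R (nrt_ball 0%R R) (@unitm F s r w).
Proof.
move=> wr Hsum Hcase.
have Hw : forall i, rw (@unitm F s r w) i = w i by move=> i; exact: rw_unitm.
apply/andP; split.
- rewrite inE; apply/forallP => c; apply/implyP; rewrite inE => Hc.
  have [G [H1 H2]] := sticky_core Hw Hsum Hcase Hc.
  by apply/existsP; exists (selx G c); rewrite !inE; apply/andP; split.
- rewrite inE /nrt_dist -ltnNge subr0 /nrt_weight.
  under eq_bigr do rewrite Hw.
  by rewrite Hsum.
Qed.

End S2.
Import GRing.Theory.

Theorem mainTheorem5 (F : finFieldType) (s r R : nat)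
  (hs : (2 <= s)%N) (hr : (0 < r)%N) (hR : (0 < R)%N)
  (hdelta : (1 <= (r + 1) * (R + 1) - s * r - 1)%N)
  (hRsr : (R + 1 <= s * r)%N) :
  (exists m : 'M[F]_(s, r), nrt_sticky R (nrt_ball 0 R) m) /\
  ~ (exists C : {set 'M[F]_(s, r)}, nrt_perfect R C /\ nrt_nontrivial C).
Proof.
have Hst : exists m : 'M[F]_(s, r), nrt_sticky R (nrt_ball 0 R) m.
  case: (leqP R.+1 s) => Rs.
  - exists (@unitm F s r (fun i : 'I_s => if (i < R.+1)%N then 1%N else 0%N)).
    apply: sticky_of.
    + by move=> i; case: ifP.
    + by rewrite sum_lt_const muln1; apply/minn_idPr.
    + right; split => //; split => //; nia.
  - pose k := (R.+1 %/ s)%N. pose rho := (R.+1 %% s)%N.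
    have Hdm : R.+1 = (k * s + rho)%N by exact: divn_eq.
    have Hrho : (rho < s)%N by rewrite ltn_pmod //; lia.
    have Hk : (0 < k)%N by rewrite divn_gt0; lia.
    exists (@unitm F s r (fun i : 'I_s => k + if (i < rho)%N then 1 else 0)%N).
    clearbody k rho.
    have ks2 : (k * 2 <= k * s)%N by rewrite leq_mul2l hs orbT.
    have kr : (k * s + rho <= s * r)%N by rewrite -Hdm; lia.
    have kr1 : (k <= r)%N.
      rewrite leqNgt; apply/negP => H.
      have := leq_mul (leqnn s) H; rewrite mulnC; lia.
    have kr2 : (0 < rho)%N -> (k < r)%N.
      move=> H0; rewrite ltnNge; apply/negP => H.
      have := leq_mul (leqnn s) H; rewrite mulnC; lia.
    apply: sticky_of.
    + move=> i; case: ifP => H; last lia.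
      have : (0 < rho)%N by apply: leq_ltn_trans H.
      move/kr2; lia.
    + rewrite big_split /= sum_lt_const sum_nat_const card_ord muln1.
      rewrite (minn_idPr (ltnW Hrho)); lia.
    + left => i; case: ifP => H; last lia.
      have : (0 < rho)%N by apply: leq_ltn_trans H.
      lia.
split => //.
case=> C [[Hdisj Hcov] _].
case: Hst => m /andP[Hcl Hnot].
have [c0 c0C _] := Hcov 0%R.
have [c cC Hc] := Hcov (m + c0)%R.
have Hnc : c != c0.
  apply/eqP => E; move: Hc Hnot; rewrite E !inE /nrt_dist addrK subr0 => ->; done.
move: Hcl; rewrite inE => /forallP/(_ (c - c0)%R)/implyP.
have -> : (m \in nrt_ball (c - c0)%R R).
  move: Hc; rewrite !inE /nrt_dist.
  by rewrite opprB addrA.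
move=> /(_ isT) /existsP[x /andP[Hx0 Hxc]].
have := Hdisj c0 c c0C cC (negbT (introF eqP (fun E => (negP Hnc) (introT eqP (esym E))))).
move=> /disjointFr => /(_ (x + c0)%R).
have -> : ((x + c0)%R \in nrt_ball c0 R).
  by move: Hx0; rewrite !inE /nrt_dist addrK subr0.
have -> : ((x + c0)%R \in nrt_ball c R).
  by move: Hxc; rewrite !inE /nrt_dist opprB addrA (addrC x) -addrA addrC.
by move=> /(_ isT).
Qed.
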